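(* Let $\gamma:\mathbb{Z}_{\ge1}\to\mathbb{R}$ be a function with $\gamma(m)\ge m$ for all integers $m\ge 1$. Let $\lambda\ge 6$ be an integer such that $\gamma(\lambda)\le \frac12\lambda\log_2\lambda-\frac14\lambda$, and let $r$ be an integer with $2^{\gamma(\lambda)}\le r\le 2^{2\gamma(\lambda)}(1+\lambda^2)$ such that $p=r^{2^\lambda}+1$ is prime. Let $s=\log_2 p$ and let $\lambda'$ be the smallest integer with $2^{\lambda'}\ge\log_2 s$. Then there exists a power of two $\beta\ge1$ such that $$2\beta\log_2 r+\lambda-\log_2\beta\le 2\,\gamma(\lambda')\,2^{\lambda'}.$$
   Context: $\log_2$ denotes the logarithm in base $2$. A power of two means an integer $2^k$ with $k\ge 0$. *)

(* Defs.v *)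
From Stdlib Require Import Reals ZArith Znumtheory.
Open Scope R_scope.

Definition log2 (x : R) : R := ln x / ln 2.

(* Main.v *)
Require Import Defs.
From Stdlib Require Import Reals ZArith Znumtheory Lra Lia.
Open Scope R_scope.

Lemma ln2_pos : 0 < ln 2.
Proof. rewrite <- ln_1. apply ln_increasing; lra. Qed.

Lemma log2_le x y : 0 < x -> x <= y -> log2 x <= log2 y.
Proof.
  intros Hx Hxy. unfold log2. apply Rmult_le_compat_r.
  - left. apply Rinv_0_lt_compat, ln2_pos.
  - destruct Hxy as [H|H]; [left; now apply ln_increasing | right; now subst].
Qed.

Lemma log2_mult x y : 0 < x -> 0 < y -> log2 (x * y) = log2 x + log2 y.
Proof.
  intros. unfold log2. rewrite ln_mult by auto. pose proof ln2_pos. field. lra.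
Qed.

Lemma log2_pow x n : 0 < x -> log2 (x ^ n) = INR n * log2 x.
Proof.
  intros. unfold log2. rewrite ln_pow by auto. pose proof ln2_pos. field. lra.
Qed.

Lemma log2_2pow n : log2 (2 ^ n) = INR n.
Proof.
  rewrite log2_pow by lra. unfold log2. pose proof ln2_pos. field. lra.
Qed.

Lemma log2_Rpower y : log2 (Rpower 2 y) = y.
Proof.
  unfold log2, Rpower. rewrite ln_exp. pose proof ln2_pos. field. lra.
Qed.

Theorem proposition5p1
  (gamma : nat -> R)
  (hgamma : forall m : nat, (1 <= m)%nat -> INR m <= gamma m)
  (lam : nat) (hlam : (6 <= lam)%nat)
  (hgl : gamma lam <= / 2 * INR lam * log2 (INR lam) - / 4 * INR lam)
  (r : Z)
  (hr1 : Rpower 2 (gamma lam) <= IZR r)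
  (hr2 : IZR r <= Rpower 2 (2 * gamma lam) * (1 + INR lam ^ 2))
  (hp : prime (r ^ Z.of_nat (2 ^ lam) + 1)%Z)
  (lam' : nat)
  (hlam'1 : log2 (log2 (IZR (r ^ Z.of_nat (2 ^ lam) + 1))) <= 2 ^ lam')
  (hlam'2 : forall k : Z,
      log2 (log2 (IZR (r ^ Z.of_nat (2 ^ lam) + 1))) <= powerRZ 2 k ->
      (Z.of_nat lam' <= k)%Z) :
  exists k : nat,
    let beta := 2 ^ k in
    2 * beta * log2 (IZR r) + INR lam - log2 beta
      <= 2 * gamma lam' * 2 ^ lam'.
Proof.
  exists 0%nat. cbv zeta. simpl pow.
  replace (log2 1) with 0 by (unfold log2; rewrite ln_1; lra).
  set (L := log2 (IZR r)).
  assert (Hrp : 0 < IZR r).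
  { eapply Rlt_le_trans; [|exact hr1]. unfold Rpower. apply exp_pos. }
  assert (hL1 : gamma lam <= L).
  { rewrite <- (log2_Rpower (gamma lam)). apply log2_le; auto. unfold Rpower; apply exp_pos. }
  assert (H6 : 6 <= INR lam) by (replace 6 with (INR 6) by (simpl; lra); now apply le_INR).
  assert (hgam : INR lam <= gamma lam) by (apply hgamma; lia).
  assert (hsq : 0 < 1 + INR lam ^ 2) by nra.
  assert (hL2 : L <= 2 * gamma lam + log2 (1 + INR lam ^ 2)).
  { rewrite <- (log2_Rpower (2 * gamma lam)), <- log2_mult; auto.
    apply log2_le; auto. unfold Rpower; apply exp_pos. }
  set (a := log2 (INR lam)).
  assert (ha : 5 / 2 <= a).
  { assert (log2 32 <= log2 36) by (apply log2_le; lra).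
    replace 32 with (2 ^ 5) in H by (simpl; lra).
    replace 36 with (6 * 6) in H by lra.
    rewrite log2_2pow, log2_mult in H by lra. simpl INR in H.
    assert (log2 6 <= a) by (apply log2_le; lra). lra. }
  assert (hsq2 : log2 (1 + INR lam ^ 2) <= 1 + 2 * a).
  { assert (log2 (1 + INR lam ^ 2) <= log2 (2 * INR lam ^ 2)) by (apply log2_le; nra).
    rewrite log2_mult, log2_pow in H by nra.
    replace (log2 2) with 1 in H; [simpl INR in H; unfold a; lra|].
    unfold log2. field. pose proof ln2_pos; lra. }
  assert (hLa : a <= log2 L) by (apply log2_le; lra).
  assert (hs : INR lam + log2 L <= log2 (log2 (IZR (r ^ Z.of_nat (2 ^ lam) + 1)))).
  { assert (HN : 0 < 2 ^ lam) by (apply pow_lt; lra).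
    rewrite <- (log2_2pow lam), <- log2_mult by lra.
    apply log2_le; [nra|].
    rewrite plus_IZR, <- pow_IZR.
    apply Rle_trans with (log2 (IZR r ^ (2 ^ lam)%nat)).
    - rewrite log2_pow, pow_INR by auto. simpl INR.
      replace (1+1) with 2 by lra. unfold L; lra.
    - apply log2_le; [apply pow_lt; auto | lra]. }
  assert (hX : INR lam + a <= 2 ^ lam') by lra.
  assert (hl' : a <= INR lam').
  { rewrite <- log2_2pow. apply Rle_trans with (log2 (INR lam + a)).
    - apply log2_le; lra.
    - apply log2_le; lra. }
  assert (hlam'pos : (1 <= lam')%nat).
  { destruct lam'; [simpl in hX; lra | lia]. }
  pose proof (hgamma lam' hlam'pos).
  assert (a * (INR lam + a) <= gamma lam' * 2 ^ lam') by (apply Rmult_le_compat; lra).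
  assert (a * a - 2 * a - 1 >= 0) by nra.
  fold a in hgl.
  assert (E1 : / 2 * INR lam * a = / 2 * (INR lam * a)) by ring.
  assert (E2 : a * (INR lam + a) = INR lam * a + a * a) by ring.
  assert (E3 : 2 * gamma lam' * 2 ^ lam' = 2 * (gamma lam' * 2 ^ lam')) by ring.
  rewrite E3. rewrite E1 in hgl. rewrite E2 in H0. lra.
Qed.
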